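(* Let $d\ge 0$ be an integer. Every triangle-free graph $G$ with $\mathrm{tww}(G)\le d$ admits a proper vertex coloring with at most $d+2$ colors.
   Context: A trigraph $H$ consists of a vertex set $V(H)$ and two disjoint sets of unordered pairs of distinct vertices: black edges $E(H)$ and red edges $R(H)$. Two vertices are adjacent (neighbors) if they are joined by a black or a red edge. The red graph of $H$ is the graph $(V(H),R(H))$; $H$ is a $d$-trigraph if its red graph has maximum degree at most $d$. A graph is a trigraph with no red edges. Contracting two distinct vertices $u,v$ of a trigraph $H$ yields the trigraph obtained by deleting $u$ and $v$ and adding a new vertex $z$ such that, for every other vertex $x$: $zx$ is a black edge if both $ux$ and $vx$ are black edges; $zx$ is not an edge if $x$ is adjacent to neither $u$ nor $v$; and $zx$ is a red edge otherwise. All edges not incident to $u$ or $v$ are unchanged. A $d$-sequence of an $n$-vertex graph $G$ is a sequence of $d$-trigraphs $G=G_n,G_{n-1},\dots,G_1$ such that $G_1$ has a single vertex and each $G_{i-1}$ is obtained from $G_i$ by one contraction (so $G_i$ has $i$ vertices). The twin-width $\mathrm{tww}(G)$ of $G$ is the minimum $d$ such that $G$ admits a $d$-sequence. *)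

(* Defs.v *)
From mathcomp Require Import all_boot.
Set Implicit Arguments. Unset Strict Implicit. Unset Printing Implicit Defensive.

(* A trigraph whose vertices are labelled by elements of a finite universe T.
   V(H) = tv H; black edges = tb H; red edges = tr H (only meaningful on V(H)). *)
Record trigraph (T : finType) := Trigraph {
  tv : {set T};
  tb : rel T;
  tr : rel T }.

Section Trigraphs.
Variable T : finType.

Definition tadj (H : trigraph T) : rel T := fun x y => tb H x y || tr H x y.

Definition trigraph_ok (H : trigraph T) : Prop :=
  [/\ forall x y, tadj H x y -> [/\ x \in tv H, y \in tv H & x != y],
      forall x y, tb H x y = tb H y x,
      forall x y, tr H x y = tr H y x &
      forall x y, ~~ (tb H x y && tr H x y)].

Definition dtrigraph (d : nat) (H : trigraph T) : Prop :=
  trigraph_ok H /\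
  forall x, x \in tv H -> #|[set y in tv H | tr H x y]| <= d.

(* H' is obtained from H by contracting the distinct vertices u, v of H into a
   new vertex z (z may reuse the label of u or v, but not of another vertex). *)
Definition contraction (H H' : trigraph T) : Prop :=
  exists u v z,
  [/\ u \in tv H, v \in tv H, u != v,
      z \notin tv H :\: [set u; v] &
      [/\ tv H' = z |: (tv H :\: [set u; v]),
          trigraph_ok H',
          (forall x y, x \in tv H' :\ z -> y \in tv H' :\ z ->
             tb H' x y = tb H x y /\ tr H' x y = tr H x y) &
          (forall x, x \in tv H' :\ z ->
             [/\ tb H' z x = (tb H u x && tb H v x),
                 (~~ tadj H' z x) = (~~ tadj H u x && ~~ tadj H v x) &
                 tr H' z x = (tadj H u x || tadj H v x) && ~~ (tb H u x && tb H v x)])]].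

Inductive dseq (d : nat) : trigraph T -> Prop :=
| dseq_end H : dtrigraph d H -> #|tv H| <= 1 -> dseq d H
| dseq_step H H' : dtrigraph d H -> contraction H H' -> dseq d H' -> dseq d H.

Definition simple_graph (e : rel T) : Prop :=
  (forall x y, e x y = e y x) /\ (forall x, ~~ e x x).

Definition graph_trigraph (e : rel T) : trigraph T :=
  Trigraph setT e (fun _ _ => false).

Definition tww_le (e : rel T) (d : nat) : Prop := dseq d (graph_trigraph e).

Definition triangle_free (e : rel T) : Prop :=
  forall x y z, ~ [&& e x y, e y z & e x z].

Definition proper_coloring (k : nat) (e : rel T) (c : T -> 'I_k) : Prop :=
  forall x y, e x y -> c x != c y.

End Trigraphs.

(* Main.v *)
Require Import Defs.
From mathcomp Require Import all_boot.
Set Implicit Arguments. Unset Strict Implicit. Unset Printing Implicit Defensive.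

Definition real (T : finType) (e : rel T) (H : trigraph T) (part : T -> {set T}) : Prop :=
 [/\ forall g, exists2 y, y \in tv H & g \in part y,
     forall x y, x \in tv H -> y \in tv H -> x != y -> [disjoint part x & part y],
     forall x y, x \in tv H -> y \in tv H -> x != y ->
        (tadj H x y <-> exists a b, [/\ a \in part x, b \in part y & e a b]) &
     forall x y a b, x \in tv H -> y \in tv H -> x != y -> tb H x y ->
        a \in part x -> b \in part y -> e a b].

Lemma real_contract (T : finType) (e : rel T) (H H' : trigraph T) part u v z :
 (forall x y, e x y = e y x) ->
 trigraph_ok H' ->
 u \in tv H -> v \in tv H -> u != v -> z \notin tv H :\: [set u; v] ->
 tv H' = z |: (tv H :\: [set u; v]) ->
 (forall x y, x \in tv H' :\ z -> y \in tv H' :\ z ->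
             tb H' x y = tb H x y /\ tr H' x y = tr H x y) ->
 (forall x, x \in tv H' :\ z ->
             [/\ tb H' z x = (tb H u x && tb H v x),
                 (~~ tadj H' z x) = (~~ tadj H u x && ~~ tadj H v x) &
                 tr H' z x = (tadj H u x || tadj H v x) && ~~ (tb H u x && tb H v x)]) ->
 real e H part ->
 real e H' (fun x => if x == z then part u :|: part v else part x).
Proof.
move=> esym [_ bsym rsym _] uH vH uv zn tvH' same zrule [cov dis adj cpl].
have memz : forall x, (x \in tv H' :\ z) = (x \in tv H :\: [set u; v]).
  move=> x; rewrite in_setD1 tvH' in_setU1; case: (eqVneq x z) => [->|//].
  by rewrite (negbTE zn).
have memH : forall x, x \in tv H :\: [set u; v] -> [/\ x \in tv H, x != u & x != v].
  by move=> x; rewrite !inE negb_or => /andP[/andP[-> ->] ->].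
have zH' : z \in tv H' by rewrite tvH' setU11.
have inH' : forall x, x \in tv H' -> x != z -> x \in tv H :\: [set u; v].
  by move=> x xH xz; rewrite -memz in_setD1 xz.
have tadjz : forall x, x \in tv H' :\ z -> tadj H' z x = tadj H u x || tadj H v x.
  move=> x /zrule[_ E _]; apply/idP/idP.
    by move=> h; apply/negPn; rewrite negb_or -E h.
  by move=> h; apply/negPn; rewrite E negb_and !negbK.
have tadjsym : forall x y, tadj H' x y = tadj H' y x.
  by move=> x y; rewrite /tadj bsym rsym.
have adjz : forall y, y \in tv H' -> y != z ->
   (tadj H' z y <-> exists a b, [/\ a \in part u :|: part v, b \in part y & e a b]).
  move=> y yH yz; have ym : y \in tv H' :\ z by rewrite in_setD1 yz.
  have [yH0 yu yv] := memH _ (inH' _ yH yz).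
  have uy : u != y by rewrite eq_sym.
  have vy : v != y by rewrite eq_sym.
  rewrite tadjz //; split.
    case/orP=> [/(adj u y uH yH0 uy)|/(adj v y vH yH0 vy)] [a [b [ap bp eab]]];
      by exists a, b; rewrite inE ap ?orbT.
  case=> a [b []]; rewrite inE => /orP[ap|ap] bp eab.
    by apply/orP; left; apply/(adj u y uH yH0 uy); exists a, b.
  by apply/orP; right; apply/(adj v y vH yH0 vy); exists a, b.
have tbz : forall y a b, y \in tv H' -> y != z -> tb H' z y ->
     a \in part u :|: part v -> b \in part y -> e a b.
  move=> y a b yH yz; have ym : y \in tv H' :\ z by rewrite in_setD1 yz.
  have [yH0 yu yv] := memH _ (inH' _ yH yz).
  have [-> _ _] := zrule y ym; case/andP=> tu tv.
  rewrite inE => /orP[ap|ap] bp.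
    by apply: (cpl u y a b) => //; rewrite eq_sym.
  by apply: (cpl v y a b) => //; rewrite eq_sym.
split.
- move=> g; have [y yH gy] := cov g.
  case: (eqVneq y u) => [yu|yu].
    by exists z => //; rewrite eqxx inE -yu gy.
  case: (eqVneq y v) => [yv|yv].
    by exists z => //; rewrite eqxx inE -yv gy orbT.
  have ym : y \in tv H :\: [set u; v] by rewrite !inE negb_or yu yv yH.
  have yz : y != z by apply: contraNneq zn => <-.
  by exists y; [rewrite tvH' setU1r | rewrite (negbTE yz)].
- have dz : forall y, y \in tv H' -> y != z -> [disjoint part u :|: part v & part y].
    move=> y yH yz; have [yH0 yu yv] := memH _ (inH' _ yH yz).
    rewrite -setI_eq0 setIUl setU_eq0 !setI_eq0; apply/andP; split; apply: dis => //; by rewrite eq_sym.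
  move=> x y xH yH xy.
  case: (eqVneq x z) => [xz|xz]; case: (eqVneq y z) => [yz|yz].
  + by rewrite xz yz eqxx in xy.
  + by rewrite xz in xy *; apply: dz.
  + by rewrite disjoint_sym; apply: dz.
  + have [xH0 _ _] := memH _ (inH' _ xH xz); have [yH0 _ _] := memH _ (inH' _ yH yz).
    exact: dis.
- move=> x y xH yH xy.
  case: (eqVneq x z) => [xz|xz]; case: (eqVneq y z) => [yz|yz].
  + by rewrite xz yz eqxx in xy.
  + by rewrite xz; exact: adjz.
  + rewrite yz tadjsym; have [A1 A2] := adjz x xH xz; split.
      by move/A1=> [a [b [ap bp eab]]]; exists b, a; split => //; rewrite esym.
    by case=> a [b [ap bp eab]]; apply: A2; exists b, a; split => //; rewrite esym.
  + have xm : x \in tv H' :\ z by rewrite in_setD1 xz.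
    have ym : y \in tv H' :\ z by rewrite in_setD1 yz.
    have [xH0 _ _] := memH _ (inH' _ xH xz); have [yH0 _ _] := memH _ (inH' _ yH yz).
    have [E1 E2] := same x y xm ym.
    by rewrite /tadj E1 E2; exact: adj.
- move=> x y a b xH yH xy.
  case: (eqVneq x z) => [xz|xz]; case: (eqVneq y z) => [yz|yz].
  + by rewrite xz yz eqxx in xy.
  + by rewrite xz; exact: tbz.
  + rewrite yz bsym => tb ap bp; rewrite esym; exact: (tbz x).
  + have xm : x \in tv H' :\ z by rewrite in_setD1 xz.
    have ym : y \in tv H' :\ z by rewrite in_setD1 yz.
    have [xH0 _ _] := memH _ (inH' _ xH xz); have [yH0 _ _] := memH _ (inH' _ yH yz).
    have [E1 E2] := same x y xm ym.
    by rewrite E1; exact: cpl.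
Qed.

Definition o0 d : 'I_(d+2).
Proof. by exists 0; rewrite addn2. Defined.

Lemma dseq_dtri (T : finType) d (H : trigraph T) : dseq d H -> dtrigraph d H.
Proof. by case. Qed.

Lemma main_col (T : finType) (e : rel T) (d : nat) (H : trigraph T) :
 (forall x y, e x y = e y x) -> triangle_free e -> dseq d H ->
 forall part, real e H part -> forall W : {set T},
 (forall x, x \in tv H -> forall a b, a \in part x :&: W -> b \in part x :&: W -> ~~ e a b) ->
 exists c : T -> 'I_(d+2), (forall a b, a \in W -> b \in W -> e a b -> c a != c b) /\
   (forall x, x \in tv H -> forall a b, a \in part x :&: W -> b \in part x :&: W -> c a = c b).
Proof.
move=> esym tf; elim=> {H}.
  move=> H _ H1 part [cov _ _ _] W ind; exists (fun _ => o0 d); split=> // a b aW bW eab.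
  have [x xH ax] := cov a; have [y yH bY] := cov b.
  have xy : x = y by apply: (card_le1_eqP H1).
  subst y; have := ind x xH a b; rewrite !inE ax bY aW bW eab => /(_ isT isT).
  by [].
move=> H H' dH [u [v [z [uH vH uv zn [tvH' okH' same zrule]]]]] dsH' IH part rH.
have rH' := real_contract esym okH' uH vH uv zn tvH' same zrule rH.
have [cov dis adj cpl] := rH.
have [_ redb] := dseq_dtri dsH'.
have zH' : z \in tv H' by rewrite tvH' setU11.
have memz : forall x, (x \in tv H' :\ z) = (x \in tv H :\: [set u; v]).
  move=> x; rewrite in_setD1 tvH' in_setU1; case: (eqVneq x z) => [->|//].
  by rewrite (negbTE zn).
suff S : forall n (W : {set T}), #|W| < n ->
  (forall x, x \in tv H -> forall a b, a \in part x :&: W -> b \in part x :&: W -> ~~ e a b) ->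
  exists c : T -> 'I_(d+2), (forall a b, a \in W -> b \in W -> e a b -> c a != c b) /\
   (forall x, x \in tv H -> forall a b, a \in part x :&: W -> b \in part x :&: W -> c a = c b).
  by move=> W; apply: (S _ W (ltnSn _)).
elim=> [|n IHn] W //= Wn ind.
case: (boolP [exists a, exists b,
   [&& a \in (part u :|: part v) :&: W, b \in (part u :|: part v) :&: W & e a b]]) => [EX|NEX].
  have [a [b [aX bW' eab]]] : exists a b, [/\ a \in part u :&: W, b \in part v :&: W & e a b].
    case/existsP: EX => a0 /existsP[b0 /and3P[]].
    rewrite !inE => /andP[/orP[a0u|a0v] a0W] /andP[/orP[b0u|b0v] b0W] e0.
    - by have := ind u uH a0 b0; rewrite !inE a0u a0W b0u b0W e0 => /(_ isT isT).
    - by exists a0, b0; rewrite !inE a0u a0W b0v b0W.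
    - by exists b0, a0; rewrite !inE a0v a0W b0u b0W esym.
    - by have := ind v vH a0 b0; rewrite !inE a0v a0W b0v b0W e0 => /(_ isT isT).
  set X := part u :&: W; set W' := W :\: X.
  have W'n : #|W'| < n.
    have : W' \proper W.
      apply/properP; split; first by apply: subsetDl.
      by exists a; [move: aX; rewrite inE => /andP[] | rewrite inE aX].
    by move/proper_card => h; apply: leq_trans h _.
  have [c' [cp' cc']] : exists c' : T -> 'I_(d+2),
      (forall a b, a \in W' -> b \in W' -> e a b -> c' a != c' b) /\
      (forall x, x \in tv H -> forall a b, a \in part x :&: W' -> b \in part x :&: W' -> c' a = c' b).
    apply: IHn => // x xH p q; rewrite !inE => /andP[pp /andP[_ pW]] /andP[qp /andP[_ qW]].
    by apply: (ind x xH); rewrite inE ?pp ?qp.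
  pose h y := if [pick g in part y :&: W'] is Some g then c' g else o0 d.
  pose Y := v |: [set y in tv H' | tr H' z y].
  pose F := h @: Y.
  have Fc : #|F| < d + 2.
    apply: (leq_ltn_trans (leq_imset_card _ _)).
    rewrite cardsU1 addn2 ltnS; apply: (leq_trans (leq_add (leq_b1 _) (redb z zH'))).
    by rewrite add1n.
  have [k kF] : exists k, k \notin F.
    apply/existsP; apply: contraLR Fc => /existsPn allF.
    rewrite -leqNgt; have -> : F = setT by apply/setP => k; rewrite inE; apply/negPn.
    by rewrite cardsT card_ord.
  have key : forall f g, f \in X -> g \in W' -> e f g -> c' g \in F.
    move=> f g fX gW' efg; have [y yH gy] := cov g.
    have gW : g \in W by move: gW'; rewrite inE => /andP[].
    have gX : g \notin X by move: gW'; rewrite inE => /andP[].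
    have yu : y != u by apply: contraNneq gX => yu; rewrite inE -yu gy gW.
    have -> : c' g = h y.
      rewrite /h; case: pickP => [g' g'in|none]; last by have := none g; rewrite inE gy gW'.
      by apply: (cc' y yH); rewrite // inE gy gW'.
    apply: imset_f; rewrite /Y in_setU1; case: (eqVneq y v) => //= yv.
    have ym : y \in tv H' :\ z by rewrite memz !inE negb_or yu yv yH.
    rewrite inE; move: (ym); rewrite in_setD1 => /andP[_ ->] /=.
    have [_ _ ->] := zrule y ym.
    have uy : u != y by rewrite eq_sym.
    have tuy : tadj H u y.
      apply/(adj u y uH yH uy); exists f, g; split => //.
      by move: fX; rewrite inE => /andP[].
    rewrite tuy /=; apply/negP => /andP[tu tv].
    have [au aW] : a \in part u /\ a \in W by move: aX; rewrite inE => /andP[].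
    have [bv bW] : b \in part v /\ b \in W by move: bW'; rewrite inE => /andP[].
    have e1 := cpl u y a g uH yH uy tu au gy.
    have vy : v != y by rewrite eq_sym.
    have e2 := cpl v y b g vH yH vy tv bv gy.
    by apply: (tf a b g); rewrite eab e1 e2.
  exists (fun g => if g \in X then k else c' g); split.
    move=> p q pW qW epq.
    have W'E : forall r, r \in W -> r \notin X -> r \in W' by move=> r rW rX; rewrite inE rX.
    case: ifPn => pX; case: ifPn => qX.
    - have [pu _] : p \in part u /\ p \in W by move: pX; rewrite inE => /andP[].
      by have := ind u uH p q pX qX; rewrite epq.
    - by apply: contraNneq kF => ->; apply: (key p q) => //; apply: W'E.
    - by apply: contraNneq kF => <-; apply: (key q p) => //; [apply: W'E | rewrite esym].
    - by apply: cp' => //; apply: W'E.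
  move=> x xH p q; case: (eqVneq x u) => [->|xu] pin qin.
    by rewrite pin qin.
  have nX : forall r, r \in part x :&: W -> r \notin X.
    move=> r; rewrite !inE => /andP[rx _]; rewrite (disjointFr (dis x u xH uH xu) rx).
    by [].
  rewrite (negbTE (nX p pin)) (negbTE (nX q qin)); apply: (cc' x xH).
    by have pX := nX p pin; move/setIP: pin => [px pW]; rewrite in_setI in_setD px pW pX.
  by have qX := nX q qin; move/setIP: qin => [qx qW]; rewrite in_setI in_setD qx qW qX.
have indz : forall a b, a \in (part u :|: part v) :&: W -> b \in (part u :|: part v) :&: W -> ~~ e a b.
  move=> a b aI bI; apply/negP => eab; move/negP: NEX; apply; apply/existsP; exists a.
  by apply/existsP; exists b; rewrite aI bI eab.
have hW : forall x, x \in tv H' -> forall a b,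
   a \in (if x == z then part u :|: part v else part x) :&: W ->
   b \in (if x == z then part u :|: part v else part x) :&: W -> ~~ e a b.
  move=> x xH'; case: (eqVneq x z) => [_|xz] /=; first exact: indz.
  have : x \in tv H :\: [set u;v] by rewrite -memz in_setD1 xz.
  rewrite in_setD => /andP[_ xH]; exact: ind.
have [c [cp cc]] := IH _ rH' W hW.
exists c; split => // x xH a b aI bI.
have sU : part u :&: W \subset (part u :|: part v) :&: W by apply: setSI; apply: subsetUl.
have sV : part v :&: W \subset (part u :|: part v) :&: W by apply: setSI; apply: subsetUr.
case: (eqVneq x u) => [xu|xu].
  by rewrite xu in aI bI; apply: (cc z zH'); rewrite eqxx; apply: (subsetP sU).
case: (eqVneq x v) => [xv|xv].
  by rewrite xv in aI bI; apply: (cc z zH'); rewrite eqxx; apply: (subsetP sV).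
have xz : x != z by apply: contraNneq zn => <-; rewrite !inE negb_or xu xv xH.
have xH' : x \in tv H' by rewrite tvH' in_setU1 !inE negb_or xu xv xH orbT.
by apply: (cc x xH'); rewrite (negbTE xz).
Qed.

Theorem mainTheorem9 (d : nat) (T : finType) (e : rel T) :
  simple_graph e -> triangle_free e -> tww_le e d ->
  exists c : T -> 'I_(d + 2), proper_coloring e c.
Proof.
move=> [esym irr] tf ds.
have rG : real e (graph_trigraph e) (fun x => [set x]).
  split.
  - by move=> g; exists g; rewrite ?inE.
  - move=> x y _ _ xy; rewrite disjoint_sym -setI_eq0; apply/eqP/setP => w.
    by rewrite !inE; apply/andP => -[/eqP -> /eqP yx]; rewrite yx eqxx in xy.
  - move=> x y _ _ xy; rewrite /tadj /= orbF; split.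
      by move=> exy; exists x, y; rewrite !inE !eqxx.
    by case=> a [b []]; rewrite !inE => /eqP -> /eqP ->.
  - by move=> x y a b _ _ _ /= exy; rewrite !inE => /eqP -> /eqP ->.
have hW : forall x, x \in tv (graph_trigraph e) -> forall a b,
   a \in [set x] :&: setT -> b \in [set x] :&: setT -> ~~ e a b.
  by move=> x _ a b; rewrite !inE => /andP[/eqP -> _] /andP[/eqP -> _].
have [c [cp _]] := main_col esym tf ds rG hW.
by exists c => x y exy; apply: cp; rewrite ?inE.
Qed.
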